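(* Let $n\ge 1$. The topologically distinct endstates of Planted Brussels Sprouts of order $n$ are in bijective correspondence with the noncrossing trees on $n$ labeled vertices. The correspondence sends an endstate to the graph on vertex set $\{1,\dots,n\}$ whose edges are the sets $\{i,j\}$ such that some arc of the game joined two arms with short labels $i$ and $j$.
   Context: Planted Brussels Sprouts of order $n$: start with a closed disk with $n$ marked points on its boundary circle, labeled $1,\dots,n$ in clockwise order. Attached to each marked point is an arm, a short segment pointing into the interior of the disk; these arms are free. A move consists of two steps. First, choose two free arms and join their free ends by a simple curve (an arc) in the disk that does not intersect any previously drawn arc or arm; the two joined arms cease to be free. Second, mark a point (a notch) on the arc, from which two new free arms emanate, one on each side of the arc. The game ends when no move is possible, and the final configuration is called an endstate. Long labels: the original arm at point $i$ has long label $i$. If an arc joins arms with long labels $\alpha$ and $\beta$, the two new arms receive long labels $(\alpha,\beta)$ and $(\beta,\alpha)$, placed so that, going clockwise around the notch, one sees the old arm $\alpha$, the new arm $(\alpha,\beta)$, the old arm $\beta$, and the new arm $(\beta,\alpha)$. Two endstates are topologically equivalent (considered the same) iff some homeomorphism of the disk carries one to the other preserving long labels; equivalently, iff they have the same set of long labels. Short labels: the original arm at point $i$ has short label $i$. If an arc joins arms with short labels $i$ and $j$, the two new arms receive short labels $i$ and $j$, placed so that, going clockwise around the notch, one sees the old arm $i$, the new arm $i$, the old arm $j$, and the new arm $j$. A noncrossing tree on $n$ labeled vertices is a tree on vertices $1,\dots,n$ with the following property: when the vertices are placed in increasing clockwise order on a circle and the edges are drawn as chords, no two distinct edges intersect in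 their interiors. *)

(* Defs.v *)
From Stdlib Require Import List Arith Relations.
Import ListNotations.

(** Long labels: the original arm at point i has label [Base i]; an arc
    joining arms alpha, beta creates arms [Pair alpha beta], [Pair beta alpha]. *)
Inductive lab : Type :=
| Base : nat -> lab
| Pair : lab -> lab -> lab.

(** Short label.  The new arm (alpha,beta) is the one seen clockwise right
    after the old arm alpha around the notch, so it receives alpha's short
    label: short (alpha,beta) = short alpha. *)
Fixpoint short (l : lab) : nat :=
  match l with
  | Base i => i
  | Pair a _ => short a
  end.

(** Every face (region) of the disk is a topological disk;
    it is recorded by the list of the free arms pointing into it, in the
    clockwise order in which they are met along its boundary (a cyclic
    sequence, the list being any linearization).  [arcs] records, for every
    move made, the pair of (long labels of) arms joined by the arc. *)
Record state : Type := mkState { faces : list (list lab); arcs : list (lab * lab) }.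

Definition init (n : nat) : state := mkState [map Base (seq 1 n)] [].

(** One move: pick a face, rotate its cyclic arm sequence to the form
    a :: X ++ b :: Y (clockwise), join arms a and b by an arc.  The arc splits
    the face in two: the side met clockwise from a to b contains the arms X
    and the new arm (a,b); the other side contains Y and the new arm (b,a). *)
Inductive step : state -> state -> Prop :=
| step_intro : forall (F1 F2 : list (list lab)) (u v X Y : list lab)
                      (a b : lab) (A : list (lab * lab)),
    v ++ u = a :: X ++ b :: Y ->
    step (mkState (F1 ++ (u ++ v) :: F2) A)
         (mkState (F1 ++ (X ++ [Pair a b]) :: (Y ++ [Pair b a]) :: F2) ((a, b) :: A)).

Definition reachable (n : nat) (s : state) : Prop := clos_refl_trans state step (init n) s.

Definition endstate (n : nat) (s : state) : Prop :=
  reachable n s /\ forall s', ~ step s s'.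

Definition long_labels (n : nat) (s : state) (l : lab) : Prop :=
  (exists i, 1 <= i <= n /\ l = Base i) \/
  (exists a b, In (a, b) (arcs s) /\ (l = Pair a b \/ l = Pair b a)).

(** Topological equivalence of endstates (= same set of long labels). *)
Definition top_equiv (n : nat) (s t : state) : Prop :=
  forall l, long_labels n s l <-> long_labels n t l.

Definition graph_of (s : state) (i j : nat) : Prop :=
  exists a b, In (a, b) (arcs s) /\
    ((short a = i /\ short b = j) \/ (short a = j /\ short b = i)).

Fixpoint walk (E : nat -> nat -> Prop) (l : list nat) : Prop :=
  match l with
  | x :: ((y :: _) as t) => E x y /\ walk E t
  | _ => True
  end.

Definition noncrossing_tree (n : nat) (E : nat -> nat -> Prop) : Prop :=
  (forall i j, E i j -> E j i) /\
  (forall i j, E i j -> 1 <= i <= n /\ 1 <= j <= n /\ i <> j) /\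
  (forall i j, 1 <= i <= n -> 1 <= j <= n -> clos_refl_trans nat E i j) /\
  (forall x l, NoDup (x :: l) -> 2 <= length l -> ~ walk E (x :: l ++ [x])) /\
  (forall a b c d, E a b -> E c d -> ~ (a < c /\ c < b /\ b < d)).

(* Main.v *)
Require Import Defs.
From Stdlib Require Import List Arith Relations Lia Permutation Classical IndefiniteDescription.
Import ListNotations.

Definition cycopen (x y z : nat) : Prop :=
  (x < y /\ x < z /\ z < y) \/ (y <= x /\ (x < z \/ z < y)).

Definition at_ (A : list (lab * lab)) (c d : lab) : Prop := In (c, d) A \/ In (d, c) A.

Definition GA (A : list (lab * lab)) (i j : nat) : Prop :=
  exists a b, In (a, b) A /\ ((short a = i /\ short b = j) \/ (short a = j /\ short b = i)).

Lemma at_sym A c d : at_ A c d -> at_ A d c.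
Proof. unfold at_; tauto. Qed.

Lemma GA_at A i j : GA A i j <-> exists c d, at_ A c d /\ short c = i /\ short d = j.
Proof.
  unfold GA, at_; split.
  - intros (a & b & H & [[H1 H2]|[H1 H2]]).
    + exists a, b; auto.
    + exists b, a; auto.
  - intros (c & d & [H|H] & H1 & H2).
    + exists c, d; auto.
    + exists d, c; auto.
Qed.

Lemma GA_sym A i j : GA A i j -> GA A j i.
Proof. intros (a & b & H & HH); exists a, b; split; auto; tauto. Qed.

Lemma GA_cons a b A i j : GA ((a, b) :: A) i j <->
  (short a = i /\ short b = j) \/ (short a = j /\ short b = i) \/ GA A i j.
Proof.
  unfold GA; split.
  - intros (c & d & [H|H] & HH).
    + inversion H; subst; tauto.
    + right; right; exists c, d; auto.
  - intros [H|[H|(c & d & H & HH)]].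
    + exists a, b; simpl; auto.
    + exists a, b; simpl; auto.
    + exists c, d; simpl; auto.
Qed.

Lemma at_cons a b A c d : at_ ((a, b) :: A) c d <->
  (c = a /\ d = b) \/ (c = b /\ d = a) \/ at_ A c d.
Proof.
  unfold at_; simpl; split.
  - intros [[H|H]|[H|H]]; try (inversion H; subst; tauto); tauto.
  - intros [[-> ->]|[[-> ->]|[H|H]]]; tauto.
Qed.

Fixpoint ldesc (x y : lab) : Prop :=
  match y with Base _ => False | Pair y0 _ => y0 = x \/ ldesc x y0 end.

Fixpoint lsize (l : lab) : nat :=
  match l with Base _ => 1 | Pair a b => S (lsize a + lsize b) end.

Lemma ldesc_size x y : ldesc x y -> lsize x < lsize y.
Proof.
  induction y; simpl; [tauto|]. intros [->|H]; [lia|]. apply IHy1 in H; lia.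
Qed.

Lemma ldesc_trans x y z : ldesc x y -> ldesc y z -> ldesc x z.
Proof.
  induction z; simpl; [tauto|]. intros H [->|H']; auto.
Qed.

Lemma ldesc_contra c' cs e : ldesc c' cs -> ldesc cs (Pair c' e) -> False.
Proof.
  intros H1 [->|H2].
  - apply ldesc_size in H1; lia.
  - apply ldesc_size in H1; apply ldesc_size in H2; lia.
Qed.

Fixpoint before (l : list nat) (p q : nat) : Prop :=
  match l with [] => False | x :: l' => (x = p /\ In q l') \/ before l' p q end.

Definition srt (l : list nat) := forall p q, before l p q -> p < q.
Definition csorted (L : list nat) := exists l1 l2, L = l1 ++ l2 /\ srt (l2 ++ l1).

Lemma before_app l1 l2 p q : before (l1 ++ l2) p q <->
  before l1 p q \/ (In p l1 /\ In q l2) \/ before l2 p q.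
Proof.
  induction l1 as [|x l1 IH]; simpl.
  - tauto.
  - rewrite IH, in_app_iff. split.
    + intros [[-> [H|H]]|[H|[[H1 H2]|H]]]; tauto.
    + intros [[[-> H]|H]|[[[->|H1] H2]|H]]; tauto.
Qed.

Lemma srt_sub a b c : srt (a ++ b ++ c) -> srt (a ++ c).
Proof.
  unfold srt; intros H p q Hb; apply H.
  rewrite before_app in Hb |- *. rewrite before_app, in_app_iff. tauto.
Qed.

Lemma srt_app_l a b : srt (a ++ b) -> srt a.
Proof. unfold srt; intros H p q Hb; apply H; rewrite before_app; auto. Qed.
Lemma srt_app_r a b : srt (a ++ b) -> srt b.
Proof. unfold srt; intros H p q Hb; apply H; rewrite before_app; auto. Qed.

Lemma srt_nodup l : srt l -> NoDup l.
Proof.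
  induction l as [|x l IH]; intros H; constructor.
  - intros Hin. assert (x < x) by (apply H; simpl; auto). lia.
  - apply IH. intros p q Hb; apply H; simpl; auto.
Qed.

Lemma csorted_rot u v : csorted (u ++ v) -> csorted (v ++ u).
Proof.
  intros (l1 & l2 & Heq & Hs).
  destruct (app_eq_app _ _ _ _ Heq) as (w & [[H1 H2]|[H1 H2]]); subst.
  - exists (v ++ l1), w. split; [now rewrite app_assoc|].
    rewrite <- app_assoc in Hs. exact Hs.
  - exists w, (l2 ++ u). split; [now rewrite <- app_assoc|].
    rewrite <- app_assoc. exact Hs.
Qed.

Lemma csorted_prefix w q : csorted (w ++ q) -> csorted w.
Proof.
  intros (l1 & l2 & Heq & Hs).
  destruct (app_eq_app _ _ _ _ Heq) as (t & [[H1 H2]|[H1 H2]]); subst.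
  - exists l1, t. split; auto. apply (srt_sub t q l1). rewrite <- app_assoc in Hs. exact Hs.
  - exists w, []. split; [now rewrite app_nil_r|]. simpl.
    apply srt_app_r in Hs. apply srt_app_l in Hs. exact Hs.
Qed.

Lemma csorted_nodup L : csorted L -> NoDup L.
Proof.
  intros (l1 & l2 & -> & Hs). apply srt_nodup in Hs.
  eapply Permutation_NoDup; [apply Permutation_app_comm|exact Hs].
Qed.

Lemma srt_first x l y : srt (x :: l) -> In y l -> x < y.
Proof. intros H Hy; apply H; simpl; auto. Qed.

Lemma csorted_thr L : csorted L -> exists t, forall p q, before L p q ->
  (p < q /\ (p < t -> q < t)) \/ (q < t /\ t <= p).
Proof.
  intros (l1 & l2 & -> & Hs).
  assert (Hl1 : forall p q, before l1 p q -> p < q)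
    by (intros p q Hb; apply Hs; rewrite before_app; auto).
  assert (Hl2 : forall p q, before l2 p q -> p < q)
    by (intros p q Hb; apply Hs; rewrite before_app; auto).
  assert (Hx : forall p q, In p l2 -> In q l1 -> p < q)
    by (intros p q H1 H2; apply Hs; rewrite before_app; auto).
  destruct l1 as [|c l1'].
  - exists 0. intros p q Hb. left. simpl in Hb. split; [apply Hl2; auto|lia].
  - exists c. intros p q Hb. rewrite before_app in Hb.
    assert (Hc : forall z, In z (c :: l1') -> c <= z).
    { intros z [->|Hz]; [lia|]. assert (c < z) by (apply Hl1; simpl; auto). lia. }
    destruct Hb as [Hb|[[H1 H2]|Hb]].
    + left. assert (p < q) by auto. split; auto.
      assert (Hp : In p (c :: l1')).
      { clear -Hb. revert Hb. generalize (c :: l1'). induction l; simpl; [tauto|].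
        intros [[-> _]|H]; auto. }
      specialize (Hc p Hp). lia.
    + right. specialize (Hc p H1). specialize (Hx q c H2 (or_introl eq_refl)). lia.
    + left. assert (p < q) by auto. split; auto.
      intros _. assert (Hq : In q l2).
      { clear -Hb. revert Hb. induction l2; simpl; [tauto|]. intros [[_ H]|H]; auto. }
      apply (Hx q c Hq). simpl; auto.
Qed.

Lemma before_in_r l p q : before l p q -> In q l.
Proof. induction l; simpl; [tauto|]. intros [[_ H]|H]; auto. Qed.

Lemma csorted_split a X b Y : csorted (a :: X ++ b :: Y) ->
  (forall x, In x X -> cycopen a b x) /\ (forall y, In y Y -> cycopen b a y).
Proof.
  intros Hc. destruct (csorted_thr _ Hc) as (t & Ht).
  assert (Hab : before (a :: X ++ b :: Y) a b) by (simpl; left; split; auto; apply in_app_iff; simpl; auto).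
  pose proof (Ht _ _ Hab) as Fab.
  split.
  - intros x Hx.
    assert (H1 : before (a :: X ++ b :: Y) a x) by (simpl; left; split; auto; apply in_app_iff; auto).
    assert (H2 : before (a :: X ++ b :: Y) x b).
    { simpl; right. rewrite before_app. right; left. simpl; auto. }
    pose proof (Ht _ _ H1); pose proof (Ht _ _ H2). unfold cycopen; lia.
  - intros y Hy.
    assert (H1 : before (a :: X ++ b :: Y) a y) by (simpl; left; split; auto; apply in_app_iff; simpl; auto).
    assert (H2 : before (a :: X ++ b :: Y) b y).
    { simpl; right. rewrite before_app. right; right. simpl; auto. }
    pose proof (Ht _ _ H1); pose proof (Ht _ _ H2). unfold cycopen; lia.
Qed.

Lemma srt_seq s len : srt (seq s len).
Proof.
  revert s; induction len; intros s p q; simpl; [tauto|].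
  intros [[-> H]|H].
  - apply in_seq in H; lia.
  - apply (IHlen (S s)); auto.
Qed.

Lemma csorted_seq s len : csorted (seq s len).
Proof. exists (seq s len), []. rewrite app_nil_r; split; auto. apply srt_seq. Qed.

Lemma walk_cons2 (E : nat -> nat -> Prop) x y t : walk E (x :: y :: t) <-> E x y /\ walk E (y :: t).
Proof. simpl. tauto. Qed.

Lemma walk_app (E : nat -> nat -> Prop) l1 l2 : walk E (l1 ++ l2) <->
  walk E l1 /\ walk E l2 /\ (l1 <> [] -> l2 <> [] -> E (last l1 0) (hd 0 l2)).
Proof.
  induction l1 as [|x l1 IH].
  - simpl. split; [intros H; repeat split; auto; intros C; congruence| tauto].
  - destruct l1 as [|y l1].
    + destruct l2 as [|z l2]; simpl.
      * split; [intros _; repeat split; auto; intros _ C; congruence|tauto].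
      * split; [intros [H1 H2]; repeat split; auto|intros (_ & H2 & H3); split; auto; apply H3; congruence].
    + change ((x :: y :: l1) ++ l2) with (x :: y :: (l1 ++ l2)).
      rewrite walk_cons2. change (y :: l1 ++ l2) with ((y :: l1) ++ l2). rewrite IH.
      rewrite walk_cons2.
      assert (Hl : last (x :: y :: l1) 0 = last (y :: l1) 0) by reflexivity.
      rewrite Hl. split.
      * intros (H1 & H2 & H3 & H4). repeat split; auto. intros _ Hne. apply H4; congruence.
      * intros ((H1 & H2) & H3 & H4). repeat split; auto. intros _ Hne. apply H4; congruence.
Qed.

Lemma walk_mono (E E' : nat -> nat -> Prop) l : (forall x y, E x y -> E' x y) -> walk E l -> walk E' l.
Proof.
  intros HE. induction l as [|x l IH]; [simpl; auto|].
  destruct l as [|y t]; [simpl; auto|].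
  rewrite !walk_cons2. intros [H1 H2]; split; auto.
Qed.

Definition sf (f : list lab) : list nat := map short f.
Definition sameface (F : list (list lab)) (x y : nat) : Prop :=
  exists f, In f F /\ In x (sf f) /\ In y (sf f).

Record Inv (n : nat) (s : state) : Prop := mkInv {
  i_perm : Permutation (map short (concat (faces s))) (seq 1 n);
  i_cs : forall f, In f (faces s) -> csorted (sf f);
  i_arc : forall c d, at_ (arcs s) c d -> short c <> short d /\ 1 <= short c <= n /\ 1 <= short d <= n;
  i_face : forall c d f x, at_ (arcs s) c d -> In f (faces s) -> In (short c) (sf f) ->
           In x (sf f) -> x <> short c -> cycopen (short c) (short d) x;
  i_ord : forall c d c' d', at_ (arcs s) c d -> at_ (arcs s) c' d' -> short c = short c' ->
          cycopen (short d) (short c) (short d') -> ldesc c' c;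
  i_free : forall al c d, In al (concat (faces s)) -> at_ (arcs s) c d -> short c = short al -> ldesc c al;
  i_pairF : forall x y, In (Pair x y) (concat (faces s)) -> at_ (arcs s) x y;
  i_pairA : forall x y d, at_ (arcs s) (Pair x y) d -> at_ (arcs s) x y;
  i_prev : forall x y d, at_ (arcs s) (Pair x y) d -> cycopen (short d) (short x) (short y);
  i_nc : forall a b c d, GA (arcs s) a b -> GA (arcs s) c d -> ~ (a < c /\ c < b /\ b < d);
  i_ncf : forall p q f x y, GA (arcs s) p q -> In f (faces s) -> In x (sf f) -> In y (sf f) ->
          ~ (cycopen p q x /\ cycopen q p y);
  i_nc3 : forall f f' x y u v, In f (faces s) -> In f' (faces s) -> In x (sf f) -> In y (sf f) ->
          x <> y -> In u (sf f') -> In v (sf f') -> ~ In u (sf f) -> ~ (cycopen x y u /\ cycopen y x v);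
  i_conn : forall x y, 1 <= x <= n -> 1 <= y <= n ->
           clos_refl_trans nat (fun u w => GA (arcs s) u w \/ sameface (faces s) u w) x y;
  i_ac : forall P, NoDup P -> 3 <= length P -> walk (GA (arcs s)) P -> ~ GA (arcs s) (last P 0) (hd 0 P)
}.

Lemma GA_nil i j : ~ GA [] i j.
Proof. intros (a & b & H & _); inversion H. Qed.

Lemma at_nil c d : ~ at_ [] c d.
Proof. intros [H|H]; inversion H. Qed.

Lemma sf_init n : sf (map Base (seq 1 n)) = seq 1 n.
Proof. unfold sf. rewrite map_map. simpl. apply map_id. Qed.

Ltac kill_nil := repeat match goal with
  | H : at_ [] _ _ |- _ => exfalso; exact (at_nil _ _ H)
  | H : GA [] _ _ |- _ => exfalso; exact (GA_nil _ _ H)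
  end.

Lemma inv_init n : Inv n (init n).
Proof.
  constructor; simpl.
  - rewrite app_nil_r. fold (sf (map Base (seq 1 n))). rewrite sf_init. apply Permutation_refl.
  - intros f [<-|[]]. rewrite sf_init. apply csorted_seq.
  - intros; kill_nil.
  - intros; kill_nil.
  - intros; kill_nil.
  - intros; kill_nil.
  - intros x y H; exfalso. rewrite app_nil_r in H. apply in_map_iff in H. destruct H as (z & H & _); discriminate.
  - intros; kill_nil.
  - intros; kill_nil.
  - intros; kill_nil.
  - intros; kill_nil.
  - intros f f' x y u v [<-|[]] [<-|[]]; intros; contradiction.
  - intros x y Hx Hy. apply rt_step. right. exists (map Base (seq 1 n)). rewrite sf_init.
    split; [simpl; auto|]. rewrite !in_seq. lia.
  - intros P _ HP Hw. destruct P as [|x [|y t]]; simpl in HP; try lia.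
    simpl in Hw. destruct Hw as [H _]. exfalso; eapply GA_nil; eauto.
Qed.

Lemma nodup_disj {T} (l1 l2 : list T) x : NoDup (l1 ++ l2) -> In x l1 -> In x l2 -> False.
Proof.
  induction l1 as [|y l1 IH]; simpl; [tauto|].
  intros H [->|Hx] Hx2; inversion H; subst.
  - apply H2. apply in_app_iff; auto.
  - eauto.
Qed.

Lemma cross_num (E : nat -> nat -> Prop) p q z z' :
  (forall a b c d, E a b -> E c d -> ~ (a < c /\ c < b /\ b < d)) ->
  (forall x y, E x y -> E y x) -> p <> q ->
  E p q -> E z z' -> cycopen p q z -> cycopen q p z' -> False.
Proof.
  intros Hnc Hs Hpq H1 H2 C1 C2.
  pose proof (Hs _ _ H1) as H1'; pose proof (Hs _ _ H2) as H2'.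
  pose proof (Hnc _ _ _ _ H1 H2); pose proof (Hnc _ _ _ _ H1 H2');
  pose proof (Hnc _ _ _ _ H1' H2); pose proof (Hnc _ _ _ _ H1' H2');
  pose proof (Hnc _ _ _ _ H2 H1); pose proof (Hnc _ _ _ _ H2' H1);
  pose proof (Hnc _ _ _ _ H2 H1'); pose proof (Hnc _ _ _ _ H2' H1').
  unfold cycopen in *; lia.
Qed.

Lemma rt_mono (R R' : nat -> nat -> Prop) x y :
  (forall u w, R u w -> clos_refl_trans nat R' u w) ->
  clos_refl_trans nat R x y -> clos_refl_trans nat R' x y.
Proof.
  intros H Hr; induction Hr.
  - apply H; auto.
  - apply rt_refl.
  - eapply rt_trans; eauto.
Qed.

Lemma last_in_l (l : list nat) d : l <> [] -> In (last l d) l.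
Proof.
  induction l as [|x l IH]; [congruence|]. intros _. destruct l as [|y l]; simpl; auto.
  right. apply IH. congruence.
Qed.

Lemma crossing (G : nat -> nat -> Prop) p q M : p <> q -> M <> [] -> walk G M ->
  (forall z, In z M -> z <> p /\ z <> q) ->
  cycopen q p (hd 0 M) -> cycopen p q (last M 0) ->
  exists z z', G z z' /\ cycopen q p z /\ cycopen p q z'.
Proof.
  intros Hpq. induction M as [|x M IH]; [congruence|]. intros _ Hw Hin H1 H2.
  destruct M as [|y M].
  - simpl in *. exfalso. unfold cycopen in *; lia.
  - rewrite walk_cons2 in Hw. destruct Hw as [Hxy Hw].
    assert (Hy : y <> p /\ y <> q) by (apply Hin; simpl; auto).
    assert (Hc : cycopen p q y \/ cycopen q p y) by (unfold cycopen; lia).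
    destruct Hc as [Hc|Hc].
    + exists x, y; simpl in H1; auto.
    + apply IH; auto; [congruence| intros z Hz; apply Hin; simpl; auto].
Qed.

Lemma core (G : nat -> nat -> Prop) p q : p <> q ->
  (forall x y, G x y -> G y x) ->
  (forall z, G p z -> cycopen p z q) -> (forall z, G q z -> cycopen q z p) ->
  (forall z z', G z z' -> cycopen q p z -> cycopen p q z' -> False) ->
  forall Q, NoDup Q -> 3 <= length Q -> walk G Q -> hd 0 Q = p -> last Q 0 = q -> False.
Proof.
  intros Hpq Hs Hp Hq Hx Q HN HL Hw Hh Hl.
  destruct Q as [|x rest]; [simpl in HL; lia|]. simpl in Hh; subst x.
  assert (Hr : rest <> []) by (intro; subst; simpl in HL; lia).
  destruct (exists_last Hr) as (M & z & ->).
  assert (HM : M <> []) by (intro; subst; simpl in HL; lia).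
  assert (Hz : z = q).
  { rewrite <- Hl. change (p :: M ++ [z]) with ((p :: M) ++ [z]). rewrite last_last. auto. }
  subst z.
  change (p :: M ++ [q]) with ((p :: M) ++ [q]) in Hw, HN.
  apply walk_app in Hw. destruct Hw as (Hw1 & _ & Hj).
  specialize (Hj ltac:(congruence) ltac:(congruence)).
  destruct M as [|m M']; [congruence|].
  rewrite walk_cons2 in Hw1. destruct Hw1 as [Hpm Hw1].
  assert (Hlast : last (p :: m :: M') 0 = last (m :: M') 0) by reflexivity.
  rewrite Hlast in Hj.
  assert (Hnd : forall z, In z (m :: M') -> z <> p /\ z <> q).
  { intros z Hz. apply NoDup_app_remove_r in HN as HN1.
    split.
    - intros ->. inversion HN1; subst. contradiction.
    - intros ->. apply (nodup_disj (p :: m :: M') [q] q HN); simpl; auto. }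
  pose proof (Hp _ Hpm) as C1. pose proof (Hq _ (Hs _ _ Hj)) as C2.
  assert (A1 : cycopen q p (hd 0 (m :: M'))).
  { simpl. specialize (Hnd m (or_introl eq_refl)). unfold cycopen in *; lia. }
  assert (A2 : cycopen p q (last (m :: M') 0)).
  { pose proof (Hnd _ (last_in_l (m :: M') 0 ltac:(congruence))). unfold cycopen in *; lia. }
  destruct (crossing G p q (m :: M') Hpq ltac:(congruence) Hw1 Hnd A1 A2) as (z & z' & Hzz & Cz & Cz').
  eauto.
Qed.

Definition newE (i j x y : nat) : Prop := (x = i /\ y = j) \/ (x = j /\ y = i).

Lemma last_app2 (l1 l2 : list nat) d : l2 <> [] -> last (l1 ++ l2) d = last l2 d.
Proof.
  intros H. induction l1 as [|x l1 IH]; simpl; auto.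
  rewrite IH. destruct l1; simpl; destruct l2; try congruence; auto.
Qed.

Lemma hd_app2 (l1 l2 : list nat) d : l1 <> [] -> hd d (l1 ++ l2) = hd d l1.
Proof. destruct l1; simpl; congruence. Qed.

Lemma walk_split (G G' : nat -> nat -> Prop) i j :
  (forall x y, G' x y -> newE i j x y \/ G x y) ->
  forall P, walk G' P -> walk G P \/ exists P1 P2, P = P1 ++ P2 /\ P1 <> [] /\ P2 <> [] /\
     newE i j (last P1 0) (hd 0 P2) /\ walk G' P1 /\ walk G' P2.
Proof.
  intros HG. induction P as [|x P IH]; intros Hw; [left; simpl; auto|].
  destruct P as [|y P]; [left; simpl; auto|].
  rewrite walk_cons2 in Hw. destruct Hw as [Hxy Hw].
  destruct (HG _ _ Hxy) as [Hn|Hg].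
  - right. exists [x], (y :: P). repeat split; try congruence; simpl; auto.
  - destruct (IH Hw) as [Hw'|(P1 & P2 & Heq & H1 & H2 & Hn & Hw1 & Hw2)].
    + left. rewrite walk_cons2; auto.
    + right. exists (x :: P1), P2.
      split; [rewrite Heq; reflexivity|]. split; [congruence|]. split; [auto|].
      destruct P1 as [|z P1]; [congruence|].
      split; [simpl; destruct P1; auto|]. split; [|auto].
      simpl in Heq. injection Heq as Hzy. subst z.
      rewrite walk_cons2. split; auto.
Qed.

Lemma walk_avoid (G G' : nat -> nat -> Prop) i j :
  (forall x y, G' x y -> newE i j x y \/ G x y) ->
  forall P, walk G' P -> (~ In i P \/ ~ In j P) -> walk G P.
Proof.
  intros HG. induction P as [|x P IH]; intros Hw Hn; [simpl; auto|].
  destruct P as [|y P]; [simpl; auto|].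
  rewrite walk_cons2 in Hw |- *. destruct Hw as [Hxy Hw].
  split.
  - destruct (HG _ _ Hxy) as [[[-> ->]|[-> ->]]|H]; auto; exfalso; simpl in Hn; tauto.
  - apply IH; auto. simpl in Hn. tauto.
Qed.

Lemma nodup_hd_last (l : list nat) : NoDup l -> l <> [] -> hd 0 l = last l 0 -> length l = 1.
Proof.
  intros HN Hne Hhl. destruct l as [|x l]; [congruence|].
  destruct l as [|y l]; auto. exfalso. simpl in Hhl.
  apply NoDup_cons_iff in HN as [Hx _]. apply Hx. rewrite Hhl.
  apply (last_in_l (y :: l) 0). congruence.
Qed.

Lemma ac_step (G G' : nat -> nat -> Prop) i j : i <> j ->
  (forall x y, G' x y <-> newE i j x y \/ G x y) ->
  (forall P, NoDup P -> 3 <= length P -> walk G P -> ~ G (last P 0) (hd 0 P)) ->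
  (forall Q p q, newE i j p q -> NoDup Q -> 3 <= length Q -> walk G Q -> hd 0 Q = p -> last Q 0 = q -> False) ->
  forall P, NoDup P -> 3 <= length P -> walk G' P -> ~ G' (last P 0) (hd 0 P).
Proof.
  intros Hij HG Hold Hcore P HN HL Hw Hc.
  assert (HG1 : forall x y, G' x y -> newE i j x y \/ G x y) by (intros; apply HG; auto).
  destruct (walk_split G G' i j HG1 P Hw) as [Hw'|(P1 & P2 & -> & H1 & H2 & Hn & Hw1 & Hw2)].
  - apply HG in Hc. destruct Hc as [Hn|Hc].
    + apply (Hcore P (hd 0 P) (last P 0)); auto. unfold newE in *. tauto.
    + eapply Hold; eauto.
  - rewrite last_app2 in Hc by auto. rewrite hd_app2 in Hc by auto.
    assert (Hd : forall x, In x P1 -> In x P2 -> False) by (intros; eapply nodup_disj; eauto).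
    assert (HL1 : In (last P1 0) P1) by (apply last_in_l; auto).
    assert (HH2 : In (hd 0 P2) P2) by (destruct P2; [congruence|simpl; auto]).
    assert (HL2 : In (last P2 0) P2) by (apply last_in_l; auto).
    assert (HH1 : In (hd 0 P1) P1) by (destruct P1; [congruence|simpl; auto]).
    assert (Hw1' : walk G P1).
    { apply (walk_avoid G G' i j HG1 P1 Hw1). unfold newE in Hn.
      destruct Hn as [[E1 E2]|[E1 E2]]; [right|left]; intro Hin; rewrite <- E2 in Hin; eauto. }
    assert (Hw2' : walk G P2).
    { apply (walk_avoid G G' i j HG1 P2 Hw2). unfold newE in Hn.
      destruct Hn as [[E1 E2]|[E1 E2]]; [left|right]; intro Hin; rewrite <- E1 in Hin; eauto. }
    apply HG in Hc. destruct Hc as [Hc|Hc].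
    + (* closing edge new too: lengths 1 *)
      exfalso. unfold newE in Hn, Hc.
      assert (E : last P2 0 = hd 0 P2 /\ last P1 0 = hd 0 P1).
      { destruct Hn as [[E1 E2]|[E1 E2]]; destruct Hc as [[E3 E4]|[E3 E4]].
        - exfalso. rewrite E3, <- E1 in HL2. eauto.
        - split; congruence.
        - split; congruence.
        - exfalso. rewrite E3, <- E1 in HL2. eauto. }
      destruct E as [E1 E2].
      assert (length P1 = 1).
      { apply nodup_hd_last; auto. eapply NoDup_app_remove_r; eauto. }
      assert (length P2 = 1).
      { apply nodup_hd_last; auto. eapply NoDup_app_remove_l; eauto. }
      rewrite length_app in HL. lia.
    + eapply (Hcore (P2 ++ P1) (hd 0 P2) (last P1 0)).
      * unfold newE in *; tauto.
      * eapply Permutation_NoDup; [apply Permutation_app_comm|exact HN].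
      * rewrite length_app in *; lia.
      * apply walk_app. repeat split; auto.
      * apply hd_app2; auto.
      * apply last_app2; auto.
Qed.

Lemma ncf_nc r t i j : r <> t -> i <> j ->
  ~ (cycopen r t i /\ cycopen t r j) -> ~ (cycopen r t j /\ cycopen t r i) ->
  forall p q r' t', ((p = i /\ q = j) \/ (p = j /\ q = i)) -> ((r' = r /\ t' = t) \/ (r' = t /\ t' = r)) ->
  ~ (p < r' /\ r' < q /\ q < t') /\ ~ (r' < p /\ p < t' /\ t' < q).
Proof. unfold cycopen; intros; lia. Qed.

Ltac fold_sh x v :=
  repeat match goal with H : context [short x] |- _ => change (short x) with v in H end;
  repeat change (short x) with v.

Lemma inv_step n s s' : Inv n s -> step s s' -> Inv n s'.
Proof.
  intros I Hst. destruct Hst as [F1 F2 u v X Y a b A Hvu].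
  destruct I as [Iperm Ics Iarc Iface Iord Ifree IpairF IpairA Iprev Inc Incf Inc3 Iconn Iac]; simpl in *.
  set (B := u ++ v) in *.
  set (B1 := X ++ [Pair a b]). set (B2 := Y ++ [Pair b a]).
  set (R := concat F1 ++ X ++ Y ++ concat F2).
  assert (PB : Permutation B (a :: b :: X ++ Y)).
  { unfold B. eapply perm_trans; [apply Permutation_app_comm|]. rewrite Hvu.
    apply perm_skip. apply Permutation_sym, Permutation_middle. }
  assert (PF : Permutation (concat (F1 ++ B :: F2)) (a :: b :: R)).
  { rewrite concat_app. simpl. unfold R.
    eapply perm_trans. { apply Permutation_app_head. apply Permutation_app_tail. exact PB. }
    simpl.
    eapply perm_trans. { apply Permutation_sym, Permutation_middle. }
    apply perm_skip.
    eapply perm_trans. { apply Permutation_sym, Permutation_middle. }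
    apply perm_skip. rewrite <- !app_assoc. apply Permutation_refl. }
  assert (PF' : Permutation (concat (F1 ++ B1 :: B2 :: F2)) (Pair a b :: Pair b a :: R)).
  { rewrite concat_app. simpl. unfold R, B1, B2. rewrite <- !app_assoc. simpl.
    rewrite app_assoc.
    eapply perm_trans. { apply Permutation_sym, Permutation_middle. }
    apply perm_skip. rewrite app_assoc.
    eapply perm_trans. { apply Permutation_sym, Permutation_middle. }
    apply perm_skip. rewrite <- !app_assoc. apply Permutation_refl. }
  assert (HND : NoDup (map short (a :: b :: R))).
  { eapply Permutation_NoDup; [apply Permutation_map, PF|].
    eapply Permutation_NoDup; [apply Permutation_sym, Iperm|apply seq_NoDup]. }
  assert (Hrange : forall al, In al (concat (F1 ++ B :: F2)) -> 1 <= short al <= n).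
  { intros al Hal. assert (Hin : In (short al) (seq 1 n)).
    { eapply Permutation_in; [exact Iperm|]. apply in_map; auto. }
    apply in_seq in Hin. lia. }
  assert (HaF : In a (concat (F1 ++ B :: F2))) by (eapply Permutation_in; [apply Permutation_sym, PF|simpl; auto]).
  assert (HbF : In b (concat (F1 ++ B :: F2))) by (eapply Permutation_in; [apply Permutation_sym, PF|simpl; auto]).
  assert (HRF : forall al, In al R -> In al (concat (F1 ++ B :: F2)))
    by (intros al Hal; eapply Permutation_in; [apply Permutation_sym, PF|simpl; auto]).
  assert (HarmF' : forall al, In al (concat (F1 ++ B1 :: B2 :: F2)) -> al = Pair a b \/ al = Pair b a \/ In al R).
  { intros al Hal. eapply Permutation_in in Hal; [|exact PF']. simpl in Hal. destruct Hal as [H|[H|H]]; auto. }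
  simpl in HND. apply NoDup_cons_iff in HND as [HiR HND]. apply NoDup_cons_iff in HND as [HjR HNDR].
  set (i := short a) in *. set (j := short b) in *.
  assert (Hij : i <> j) by (intro E; apply HiR; left; auto).
  assert (HiR' : ~ In i (map short R)) by (intro; apply HiR; right; auto).
  clear HiR.
  assert (HmR : map short R = map short (concat F1) ++ sf X ++ sf Y ++ map short (concat F2))
    by (unfold R, sf; rewrite !map_app; auto).
  assert (HXR : forall x, In x (sf X) -> In x (map short R)) by (intros; rewrite HmR; rewrite !in_app_iff; auto).
  assert (HYR : forall x, In x (sf Y) -> In x (map short R)) by (intros; rewrite HmR; rewrite !in_app_iff; auto).
  assert (HXY : forall x, In x (sf X) -> In x (sf Y) -> False).
  { intros x H1 H2. rewrite HmR in HNDR. apply NoDup_app_remove_l in HNDR.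
    rewrite app_assoc in HNDR. apply NoDup_app_remove_r in HNDR. eapply nodup_disj; eauto. }
  assert (HsB : forall x, In x (sf B) <-> x = i \/ x = j \/ In x (sf X) \/ In x (sf Y)).
  { intros x. unfold sf. split.
    - intros Hx. eapply Permutation_in in Hx; [|apply Permutation_map, PB]. simpl in Hx.
      rewrite map_app, in_app_iff in Hx. unfold i, j. intuition.
    - intros Hx. eapply Permutation_in; [apply Permutation_map, Permutation_sym, PB|]. simpl.
      rewrite map_app, in_app_iff. unfold i, j in Hx. intuition. }
  assert (HsB1 : forall x, In x (sf B1) <-> In x (sf X) \/ x = i).
  { intros x. unfold B1, sf. rewrite map_app, in_app_iff. simpl. unfold i. intuition. }
  assert (HsB2 : forall x, In x (sf B2) <-> In x (sf Y) \/ x = j).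
  { intros x. unfold B2, sf. rewrite map_app, in_app_iff. simpl. unfold j. intuition. }
  assert (HBF : In B (F1 ++ B :: F2)) by (apply in_app_iff; simpl; auto).
  assert (Hcs : csorted (i :: sf X ++ j :: sf Y)).
  { assert (H := Ics B HBF). unfold B, sf in H. rewrite map_app in H. apply csorted_rot in H.
    rewrite <- map_app, Hvu in H. simpl in H. rewrite map_app in H. exact H. }
  destruct (csorted_split _ _ _ _ Hcs) as [HX HY].
  assert (HcB1 : csorted (sf B1)).
  { unfold B1, sf. rewrite map_app. simpl.
    change (i :: sf X ++ j :: sf Y) with ((i :: sf X) ++ (j :: sf Y)) in Hcs.
    apply csorted_prefix in Hcs. change (i :: sf X) with ([i] ++ sf X) in Hcs.
    apply csorted_rot in Hcs. exact Hcs. }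
  assert (HcB2 : csorted (sf B2)).
  { unfold B2, sf. rewrite map_app. simpl.
    change (i :: sf X ++ j :: sf Y) with ((i :: sf X) ++ (j :: sf Y)) in Hcs.
    apply csorted_rot in Hcs. apply csorted_prefix in Hcs. change (j :: sf Y) with ([j] ++ sf Y) in Hcs.
    apply csorted_rot in Hcs. exact Hcs. }
  assert (HinF' : forall f, In f (F1 ++ B1 :: B2 :: F2) -> In f F1 \/ In f F2 \/ f = B1 \/ f = B2).
  { intros f Hf. apply in_app_iff in Hf. simpl in Hf. intuition. }
  assert (HinF : forall f, In f (F1 ++ B :: F2) -> In f F1 \/ In f F2 \/ f = B).
  { intros f Hf. apply in_app_iff in Hf. simpl in Hf. intuition. }
  assert (HoldF : forall f, In f F1 \/ In f F2 -> In f (F1 ++ B :: F2)).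
  { intros f Hf. apply in_app_iff. simpl. tauto. }
  assert (HoldF' : forall f, In f F1 \/ In f F2 -> In f (F1 ++ B1 :: B2 :: F2)).
  { intros f Hf. apply in_app_iff. simpl. tauto. }
  assert (HB1F' : In B1 (F1 ++ B1 :: B2 :: F2)) by (apply in_app_iff; simpl; auto).
  assert (HB2F' : In B2 (F1 ++ B1 :: B2 :: F2)) by (apply in_app_iff; simpl; auto).
  assert (Hold_disj : forall f x, In f F1 \/ In f F2 -> In x (sf f) -> In x (sf B) -> False).
  { intros f x Hf Hx HxB.
    assert (Hx' : In x (map short (concat F1)) \/ In x (map short (concat F2))).
    { unfold sf in Hx. apply in_map_iff in Hx. destruct Hx as (al & <- & Hal).
      destruct Hf as [Hf|Hf]; [left|right]; apply in_map; apply in_concat; eauto. }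
    assert (HxR : In x (map short R)) by (rewrite HmR; rewrite !in_app_iff; tauto).
    apply HsB in HxB. destruct HxB as [->|[->|[HxB|HxB]]]; try contradiction.
    - rewrite HmR in HNDR. destruct Hx' as [Hx'|Hx'].
      + eapply nodup_disj; [exact HNDR|exact Hx'|]. rewrite !in_app_iff; tauto.
      + rewrite !app_assoc in HNDR. eapply nodup_disj; [exact HNDR| |exact Hx']. rewrite !in_app_iff; tauto.
    - rewrite HmR in HNDR. destruct Hx' as [Hx'|Hx'].
      + eapply nodup_disj; [exact HNDR|exact Hx'|]. rewrite !in_app_iff; tauto.
      + rewrite !app_assoc in HNDR. eapply nodup_disj; [exact HNDR| |exact Hx']. rewrite !in_app_iff; tauto. }
  assert (HiB : In i (sf B)) by (apply HsB; auto).
  assert (HjB : In j (sf B)) by (apply HsB; auto).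
  assert (HB1B : forall x, In x (sf B1) -> In x (sf B)) by (intros x Hx; apply HsB1 in Hx; apply HsB; tauto).
  assert (HB2B : forall x, In x (sf B2) -> In x (sf B)) by (intros x Hx; apply HsB2 in Hx; apply HsB; tauto).
  assert (HiX : ~ In i (sf X)) by (intro H; apply HXR in H; contradiction).
  assert (HiY : ~ In i (sf Y)) by (intro H; apply HYR in H; contradiction).
  assert (HjX : ~ In j (sf X)) by (intro H; apply HXR in H; contradiction).
  assert (HjY : ~ In j (sf Y)) by (intro H; apply HYR in H; contradiction).
  assert (HRs : forall al, In al R -> short al <> i /\ short al <> j).
  { intros al Hal. split; intro E; [apply HiR'|apply HjR]; rewrite <- E; apply in_map; auto. }
  assert (GAr : forall p q, GA A p q -> p <> q).
  { intros p q H. apply GA_at in H. destruct H as (c & d & H & <- & <-). apply Iarc; auto. }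
  assert (Nnc : forall p q r t, GA ((a,b)::A) p q -> GA ((a,b)::A) r t -> ~ (p < r /\ r < q /\ q < t)).
  { intros p q r t H1 H2. apply GA_cons in H1. apply GA_cons in H2. fold_sh a i; fold_sh b j.
    destruct H1 as [H1|[H1|H1]]; destruct H2 as [H2|[H2|H2]]; try lia.
    - pose proof (Incf _ _ _ _ _ H2 HBF HiB HjB); pose proof (Incf _ _ _ _ _ H2 HBF HjB HiB).
      pose proof (GAr _ _ H2).
      destruct (ncf_nc r t i j ltac:(auto) Hij ltac:(auto) ltac:(auto) p q r t ltac:(lia) ltac:(lia)); auto.
    - pose proof (Incf _ _ _ _ _ H2 HBF HiB HjB); pose proof (Incf _ _ _ _ _ H2 HBF HjB HiB).
      pose proof (GAr _ _ H2).
      destruct (ncf_nc r t i j ltac:(auto) Hij ltac:(auto) ltac:(auto) p q r t ltac:(lia) ltac:(lia)); auto.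
    - pose proof (Incf _ _ _ _ _ H1 HBF HiB HjB); pose proof (Incf _ _ _ _ _ H1 HBF HjB HiB).
      pose proof (GAr _ _ H1).
      destruct (ncf_nc p q i j ltac:(auto) Hij ltac:(auto) ltac:(auto) r t p q ltac:(lia) ltac:(lia)); auto.
    - pose proof (Incf _ _ _ _ _ H1 HBF HiB HjB); pose proof (Incf _ _ _ _ _ H1 HBF HjB HiB).
      pose proof (GAr _ _ H1).
      destruct (ncf_nc p q i j ltac:(auto) Hij ltac:(auto) ltac:(auto) r t p q ltac:(lia) ltac:(lia)); auto.
    - eapply Inc; eauto. }
  constructor; simpl.
  -
    eapply perm_trans; [apply Permutation_map, PF'|]. simpl. fold_sh a i; fold_sh b j.
    eapply perm_trans; [|exact Iperm]. apply Permutation_sym.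
    eapply perm_trans; [apply Permutation_map, PF|]. simpl. apply Permutation_refl.
  -
    intros f Hf. apply HinF' in Hf. destruct Hf as [Hf|[Hf|[->| ->]]]; auto; apply Ics, HoldF; auto.
  -
    intros c d Hat. apply at_cons in Hat.
    destruct Hat as [[-> ->]|[[-> ->]|Hat]]; [| |apply Iarc; auto]; fold_sh a i; fold_sh b j;
      (split; [auto|split; apply Hrange; auto]).
  -
    intros c d f x Hat Hf Hc Hx Hne. apply at_cons in Hat.
    apply HinF' in Hf.
    destruct Hat as [[-> ->]|[[-> ->]|Hat]]; fold_sh a i; fold_sh b j.
    + destruct Hf as [Hf|[Hf|[->| ->]]].
      * exfalso; eapply (Hold_disj f i); eauto.
      * exfalso; eapply (Hold_disj f i); eauto.
      * apply HsB1 in Hx. destruct Hx as [Hx|Hx]; [auto|contradiction].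
      * apply HsB2 in Hc. destruct Hc as [Hc|Hc]; contradiction.
    + destruct Hf as [Hf|[Hf|[->| ->]]].
      * exfalso; eapply (Hold_disj f j); eauto.
      * exfalso; eapply (Hold_disj f j); eauto.
      * apply HsB1 in Hc. destruct Hc as [Hc|Hc]; [contradiction|congruence].
      * apply HsB2 in Hx. destruct Hx as [Hx|Hx]; [auto|contradiction].
    + destruct Hf as [Hf|[Hf|[->| ->]]].
      * apply (Iface c d f x); [exact Hat|apply HoldF; tauto|auto|auto|auto].
      * apply (Iface c d f x); [exact Hat|apply HoldF; tauto|auto|auto|auto].
      * apply (Iface c d B x); [exact Hat|exact HBF|auto|auto|auto].
      * apply (Iface c d B x); [exact Hat|exact HBF|auto|auto|auto].
  -
    intros c d c' d' H1 H2 E C. apply at_cons in H1. apply at_cons in H2.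
    destruct H1 as [[-> ->]|[[-> ->]|H1]]; destruct H2 as [[-> ->]|[[-> ->]|H2]]; fold_sh a i; fold_sh b j;
      try (unfold cycopen in C; lia); try congruence.
    + eapply Ifree; eauto.
    + eapply Ifree; eauto.
    + exfalso. pose proof (Iface c d B j H1 HBF ltac:(rewrite E; auto) HjB ltac:(congruence)).
      pose proof (Iarc c d H1). rewrite E in *. unfold cycopen in *; lia.
    + exfalso. pose proof (Iface c d B i H1 HBF ltac:(rewrite E; auto) HiB ltac:(congruence)).
      pose proof (Iarc c d H1). rewrite E in *. unfold cycopen in *; lia.
    + eapply Iord; eauto.
  -
    intros al c d Hal Hat E. apply HarmF' in Hal. apply at_cons in Hat.
    destruct Hal as [->|[->|Hal]]; destruct Hat as [[-> ->]|[[-> ->]|Hat]]; simpl in E; fold_sh a i; fold_sh b j;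
      try congruence.
    + simpl; auto.
    + simpl; right. eapply Ifree; eauto.
    + simpl; auto.
    + simpl; right. eapply Ifree; eauto.
    + exfalso. destruct (HRs al Hal); congruence.
    + exfalso. destruct (HRs al Hal); congruence.
    + eapply Ifree; eauto.
  -
    intros x y H. apply HarmF' in H. destruct H as [H|[H|H]].
    + injection H as -> ->. apply at_cons; auto.
    + injection H as -> ->. apply at_cons; auto.
    + apply at_cons. right; right. apply IpairF. auto.
  -
    intros x y d H. apply at_cons in H. apply at_cons. right; right.
    destruct H as [[E ->]|[[E ->]|H]].
    + apply IpairF. rewrite E. auto.
    + apply IpairF. rewrite E. auto.
    + eapply IpairA; eauto.
  -
    intros x y d H. apply at_cons in H.
    destruct H as [[E ->]|[[E ->]|H]].
    + assert (Hxy : at_ A x y) by (apply IpairF; rewrite E; auto).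
      assert (Ex : short x = i) by (unfold i; rewrite <- E; reflexivity).
      pose proof (Iface x y B j Hxy HBF ltac:(rewrite Ex; auto) HjB ltac:(congruence)).
      pose proof (Iarc x y Hxy). fold_sh b j. rewrite Ex in *. unfold cycopen in *; lia.
    + assert (Hxy : at_ A x y) by (apply IpairF; rewrite E; auto).
      assert (Ex : short x = j) by (unfold j; rewrite <- E; reflexivity).
      pose proof (Iface x y B i Hxy HBF ltac:(rewrite Ex; auto) HiB ltac:(congruence)).
      pose proof (Iarc x y Hxy). fold_sh a i. rewrite Ex in *. unfold cycopen in *; lia.
    + eapply Iprev; eauto.
  - exact Nnc.
  -
    intros p q f x y Hpq Hf Hx Hy. apply GA_cons in Hpq. fold_sh a i; fold_sh b j.
    apply HinF' in Hf.
    destruct Hpq as [[<- <-]|[[<- <-]|Hpq]].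
    + destruct Hf as [Hf|[Hf|[->| ->]]].
      * apply (Inc3 B f i j x y HBF (HoldF f ltac:(tauto)) HiB HjB Hij Hx Hy).
        intro Hxb; apply (Hold_disj f x); [tauto|auto|auto].
      * apply (Inc3 B f i j x y HBF (HoldF f ltac:(tauto)) HiB HjB Hij Hx Hy).
        intro Hxb; apply (Hold_disj f x); [tauto|auto|auto].
      * apply HsB1 in Hx; apply HsB1 in Hy.
        destruct Hx as [Hx|Hx]; try apply HX in Hx; destruct Hy as [Hy|Hy]; try apply HX in Hy;
          unfold cycopen in *; lia.
      * apply HsB2 in Hx; apply HsB2 in Hy.
        destruct Hx as [Hx|Hx]; try apply HY in Hx; destruct Hy as [Hy|Hy]; try apply HY in Hy;
          unfold cycopen in *; lia.
    + destruct Hf as [Hf|[Hf|[->| ->]]].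
      * apply (Inc3 B f j i x y HBF (HoldF f ltac:(tauto)) HjB HiB ltac:(auto) Hx Hy).
        intro Hxb; apply (Hold_disj f x); [tauto|auto|auto].
      * apply (Inc3 B f j i x y HBF (HoldF f ltac:(tauto)) HjB HiB ltac:(auto) Hx Hy).
        intro Hxb; apply (Hold_disj f x); [tauto|auto|auto].
      * apply HsB1 in Hx; apply HsB1 in Hy.
        destruct Hx as [Hx|Hx]; try apply HX in Hx; destruct Hy as [Hy|Hy]; try apply HX in Hy;
          unfold cycopen in *; lia.
      * apply HsB2 in Hx; apply HsB2 in Hy.
        destruct Hx as [Hx|Hx]; try apply HY in Hx; destruct Hy as [Hy|Hy]; try apply HY in Hy;
          unfold cycopen in *; lia.
    + destruct Hf as [Hf|[Hf|[->| ->]]].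
      * apply (Incf p q f x y); [exact Hpq|apply HoldF; tauto|auto|auto].
      * apply (Incf p q f x y); [exact Hpq|apply HoldF; tauto|auto|auto].
      * apply (Incf p q B x y); [exact Hpq|exact HBF|auto|auto].
      * apply (Incf p q B x y); [exact Hpq|exact HBF|auto|auto].
  -
    intros f f' x y p q Hf Hf' Hx Hy Hxy Hp Hq Hnp Hc.
    apply HinF' in Hf. apply HinF' in Hf'.
    assert (Hm : forall z, In z (sf B1) \/ In z (sf B2) -> In z (sf B)) by (intros z [Hz|Hz]; auto).
    destruct Hf as [Hf|[Hf|[->| ->]]]; destruct Hf' as [Hf'|[Hf'|[->| ->]]];
    match goal with
    | Hnp : ~ In ?p (sf ?g), Hp : In ?p (sf ?g) |- _ => contradiction
    | _ => idtac
    end;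
    try (apply (Inc3 f f' x y p q); first [apply HoldF; tauto | assumption]; fail);
    try (apply (Inc3 f B x y p q); first [apply HoldF; tauto | exact HBF | assumption | apply Hm; tauto]; fail);
    try (apply (Inc3 B f' x y p q); first [apply HoldF; tauto | exact HBF | assumption | apply Hm; tauto |
          intro Hpb; apply (Hold_disj f' p); [tauto|auto|auto]]; fail).
    + apply HsB1 in Hx; apply HsB1 in Hy; apply HsB2 in Hp; apply HsB2 in Hq.
      destruct Hx as [Hx|Hx]; try apply HX in Hx; destruct Hy as [Hy|Hy]; try apply HX in Hy;
      destruct Hp as [Hp|Hp]; try apply HY in Hp; destruct Hq as [Hq|Hq]; try apply HY in Hq;
        unfold cycopen in *; lia.
    + apply HsB2 in Hx; apply HsB2 in Hy; apply HsB1 in Hp; apply HsB1 in Hq.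
      destruct Hx as [Hx|Hx]; try apply HY in Hx; destruct Hy as [Hy|Hy]; try apply HY in Hy;
      destruct Hp as [Hp|Hp]; try apply HX in Hp; destruct Hq as [Hq|Hq]; try apply HX in Hq;
        unfold cycopen in *; lia.
  -
    intros x y Hx Hy. eapply rt_mono; [|exact (Iconn x y Hx Hy)].
    intros p q [Hg|(f & Hf & Hp & Hq)].
    + apply rt_step. left. apply GA_cons. auto.
    + apply HinF in Hf. destruct Hf as [Hf|[Hf|Ef]]; [| |subst f].
      * apply rt_step. right. exists f. split; [apply HoldF'; tauto|auto].
      * apply rt_step. right. exists f. split; [apply HoldF'; tauto|auto].
      * assert (Hs : forall z, In z (sf B) -> In z (sf B1) \/ In z (sf B2)).
        { intros z Hz. apply HsB in Hz. rewrite HsB1, HsB2. tauto. }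
        assert (Hi1 : In i (sf B1)) by (apply HsB1; auto).
        assert (Hj2 : In j (sf B2)) by (apply HsB2; auto).
        assert (Eij : GA ((a, b) :: A) i j) by (apply GA_cons; auto).
        assert (Eji : GA ((a, b) :: A) j i) by (apply GA_cons; auto).
        destruct (Hs p Hp) as [Hp1|Hp2]; destruct (Hs q Hq) as [Hq1|Hq2].
        -- apply rt_step. right. exists B1; auto.
        -- eapply rt_trans; [apply rt_step; right; exists B1; split; [exact HB1F'|split; [exact Hp1|exact Hi1]]|].
           eapply rt_trans; [apply rt_step; left; exact Eij|].
           apply rt_step; right; exists B2; auto.
        -- eapply rt_trans; [apply rt_step; right; exists B2; split; [exact HB2F'|split; [exact Hp2|exact Hj2]]|].
           eapply rt_trans; [apply rt_step; left; exact Eji|].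
           apply rt_step; right; exists B1; auto.
        -- apply rt_step. right. exists B2; auto.
  -
    apply (ac_step (GA A) (GA ((a,b)::A)) i j Hij).
    + intros x y. rewrite GA_cons. unfold newE. fold_sh a i; fold_sh b j. intuition.
    + exact Iac.
    + intros Q p q Hn. unfold newE in Hn.
      assert (Hpq : p <> q) by (destruct Hn as [[-> ->]|[-> ->]]; auto).
      assert (HpB : In p (sf B)) by (destruct Hn as [[-> ->]|[-> ->]]; auto).
      assert (HqB : In q (sf B)) by (destruct Hn as [[-> ->]|[-> ->]]; auto).
      apply core; auto.
      * apply GA_sym.
      * intros z Hz. apply GA_at in Hz. destruct Hz as (c & d & Hcd & Ec & Ed).
        subst. apply (Iface c d B q Hcd HBF HpB HqB). auto.
      * intros z Hz. apply GA_at in Hz. destruct Hz as (c & d & Hcd & Ec & Ed).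
        subst. apply (Iface c d B p Hcd HBF HqB HpB). auto.
      * intros z z' Hzz C1 C2.
        apply (cross_num (GA ((a,b)::A)) q p z z' Nnc (GA_sym _) ltac:(auto)).
        -- apply GA_cons. destruct Hn as [[-> ->]|[-> ->]]; auto.
        -- apply GA_cons. auto.
        -- exact C1.
        -- exact C2.
Qed.

Lemma reach_inv n s : reachable n s -> Inv n s.
Proof.
  unfold reachable. intros H. apply clos_rt_rtn1 in H. induction H.
  - apply inv_init.
  - eapply inv_step; eauto.
Qed.

Lemma stuck_faces s : (forall s', ~ step s s') -> forall f, In f (faces s) -> length f <= 1.
Proof.
  intros Hst f Hf. destruct s as [F A]; simpl in Hf.
  destruct f as [|a [|b rest]]; simpl; try lia. exfalso.
  destruct (in_split _ _ Hf) as (F1 & F2 & ->).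
  apply (Hst (mkState (F1 ++ ([] ++ [Pair a b]) :: (rest ++ [Pair b a]) :: F2) ((a, b) :: A))).
  exact (step_intro F1 F2 [] (a :: b :: rest) [] rest a b A ltac:(rewrite app_nil_r; reflexivity)).
Qed.

Lemma walk_cycle (E : nat -> nat -> Prop) x l : walk E (x :: l ++ [x]) ->
  walk E (x :: l) /\ E (last (x :: l) 0) (hd 0 (x :: l)).
Proof.
  intros H. change (x :: l ++ [x]) with ((x :: l) ++ [x]) in H.
  apply walk_app in H. destruct H as (H1 & _ & H3). split; auto. apply H3; congruence.
Qed.

Theorem part1 n s : endstate n s -> noncrossing_tree n (graph_of s).
Proof.
  intros [Hr Hst]. pose proof (reach_inv n s Hr) as I.
  assert (Hg : forall i j, graph_of s i j <-> GA (arcs s) i j) by (intros; unfold graph_of, GA; tauto).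
  split; [|split; [|split; [|split]]].
  - intros i j H. apply Hg in H. apply Hg. apply GA_sym; auto.
  - intros i j H. apply Hg in H. apply GA_at in H. destruct H as (c & d & H & <- & <-).
    destruct (i_arc n s I c d H) as (H1 & H2 & H3). lia.
  - intros i j Hi Hj. pose proof (i_conn n s I i j Hi Hj) as Hc.
    eapply rt_mono; [|exact Hc]. intros u w [H|(f & Hf & Hu & Hw)].
    + apply rt_step. apply Hg. auto.
    + pose proof (stuck_faces s Hst f Hf). unfold sf in Hu, Hw.
      destruct f as [|al [|al' f]]; simpl in *; try lia; try contradiction.
      destruct Hu as [<-|[]]; destruct Hw as [<-|[]]. apply rt_refl.
  - intros x l HN HL Hw. apply walk_cycle in Hw. destruct Hw as [Hw Hc].
    apply (i_ac n s I (x :: l) HN ltac:(simpl; lia)).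
    + eapply walk_mono; [|exact Hw]. intros; apply Hg; auto.
    + apply Hg; auto.
  - intros a b c d H1 H2. apply Hg in H1. apply Hg in H2. eapply (i_nc n s I); eauto.
Qed.

Lemma arm_unique n s t : Inv n s -> Inv n t ->
  (forall x y, GA (arcs s) x y <-> GA (arcs t) x y) ->
  forall c d c2 d2, at_ (arcs s) c d -> at_ (arcs t) c2 d2 -> short c2 = short c -> short d2 = short d -> c2 = c.
Proof.
  intros Is It Hg c. induction c as [k|c' IHc' e IHe]; intros d c2 d2 Hs Ht E1 E2.
  - destruct c2 as [k2|c2' e2]; [simpl in E1; congruence|].
    exfalso.
    pose proof (i_prev n t It c2' e2 d2 Ht) as Cp.
    pose proof (i_pairA n t It c2' e2 d2 Ht) as Hp.
    assert (G1 : GA (arcs t) (short c2') (short e2)) by (apply GA_at; eauto).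
    apply Hg in G1. apply GA_at in G1. destruct G1 as (cs & ds & Hcs & Ecs & Eds).
    simpl in E1. rewrite E1, E2 in Cp.
    eapply (i_ord n s Is (Base k) d cs ds Hs Hcs); [simpl; congruence|]. rewrite Eds. simpl. exact Cp.
  - assert (Hp : at_ (arcs s) c' e) by (eapply i_pairA; eauto).
    pose proof (i_prev n s Is c' e d Hs) as Cp.
    destruct c2 as [k2|c2' e2].
    + exfalso.
      assert (G1 : GA (arcs s) (short c') (short e)) by (apply GA_at; eauto).
      apply Hg in G1. apply GA_at in G1. destruct G1 as (cs & ds & Hcs & Ecs & Eds).
      simpl in E1.
      eapply (i_ord n t It (Base k2) d2 cs ds Ht Hcs); [simpl; congruence|]. rewrite Eds, E1, E2. simpl. exact Cp.
    + simpl in E1.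
      pose proof (i_prev n t It c2' e2 d2 Ht) as Cp2.
      assert (Hp2 : at_ (arcs t) c2' e2) by (eapply i_pairA; eauto).
      rewrite E1, E2 in Cp2.
      assert (Ee : short e2 = short e).
      { destruct (Nat.eq_dec (short e2) (short e)) as [Eq|Ne]; auto. exfalso.
        pose proof (i_arc n s Is _ _ Hs) as (A1 & _). simpl in A1. 
        assert (Tri : cycopen (short d) (short e) (short e2) \/ cycopen (short d) (short e2) (short e))
          by (unfold cycopen in *; lia).
        destruct Tri as [T|T].
        -
          assert (G1 : GA (arcs t) (short c2') (short e2)) by (apply GA_at; eauto).
          apply Hg in G1. apply GA_at in G1. destruct G1 as (cs & ds & Hcs & Ecs & Eds).
          assert (O1 : ldesc cs (Pair c' e)).
          { eapply (i_ord n s Is (Pair c' e) d cs ds Hs Hcs); simpl; [congruence|].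
            rewrite Eds. unfold cycopen in *; lia. }
          assert (O2 : ldesc c' cs).
          { eapply (i_ord n s Is cs ds c' e Hcs Hp); [congruence|].
            rewrite Eds, Ecs, E1. unfold cycopen in *; lia. }
          eapply ldesc_contra; eauto.
        - assert (G1 : GA (arcs s) (short c') (short e)) by (apply GA_at; eauto).
          apply Hg in G1. apply GA_at in G1. destruct G1 as (cs & ds & Hcs & Ecs & Eds).
          assert (O1 : ldesc cs (Pair c2' e2)).
          { eapply (i_ord n t It (Pair c2' e2) d2 cs ds Ht Hcs); simpl; [congruence|].
            rewrite Eds, E1, E2. unfold cycopen in *; lia. }
          assert (O2 : ldesc c2' cs).
          { eapply (i_ord n t It cs ds c2' e2 Hcs Hp2); [congruence|].
            rewrite Eds, Ecs. unfold cycopen in *; lia. }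
          eapply ldesc_contra; eauto. }
      assert (Ec : c2' = c') by (eapply IHc'; eauto).
      assert (Ee2 : e2 = e).
      { eapply IHe; [apply at_sym; exact Hp|apply at_sym; exact Hp2|exact Ee|rewrite Ec; reflexivity]. }
      subst; reflexivity.
Qed.

Theorem part2 n s t : endstate n s -> endstate n t ->
  (top_equiv n s t <-> forall i j, graph_of s i j <-> graph_of t i j).
Proof.
  intros [Hs _] [Ht _]. pose proof (reach_inv n s Hs) as Is. pose proof (reach_inv n t Ht) as It.
  assert (Hgs : forall i j, graph_of s i j <-> GA (arcs s) i j) by (intros; unfold graph_of, GA; tauto).
  assert (Hgt : forall i j, graph_of t i j <-> GA (arcs t) i j) by (intros; unfold graph_of, GA; tauto).
  split.
  - intros He i j.
    assert (K : forall s1 t1, (forall l, long_labels n s1 l -> long_labels n t1 l) ->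
                graph_of s1 i j -> graph_of t1 i j).
    { intros s1 t1 Hl (a & b & Hab & HH).
      assert (Hl1 : long_labels n s1 (Pair a b)) by (right; exists a, b; auto).
      apply Hl in Hl1. destruct Hl1 as [(k & _ & Hk)|(a' & b' & Hab' & [E|E])]; [discriminate| |].
      - injection E as -> ->. exists a', b'. auto.
      - injection E as -> ->. exists a', b'. split; auto. tauto. }
    split; apply K; intros l; apply He.
  - intros Hg.
    assert (Hg' : forall x y, GA (arcs s) x y <-> GA (arcs t) x y).
    { intros x y. rewrite <- Hgs, <- Hgt. apply Hg. }
    assert (K : forall s1 t1, Inv n s1 -> Inv n t1 -> (forall x y, GA (arcs s1) x y <-> GA (arcs t1) x y) ->
                forall l, long_labels n s1 l -> long_labels n t1 l).
    { intros s1 t1 I1 I2 Hg1 l [Hb|(a & b & Hab & Hl)]; [left; auto|].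
      assert (Hat : at_ (arcs s1) a b) by (left; auto).
      assert (G : GA (arcs s1) (short a) (short b)) by (apply GA_at; eauto).
      apply Hg1 in G. apply GA_at in G. destruct G as (c2 & d2 & H2 & E1 & E2).
      assert (Ec : c2 = a) by (eapply (arm_unique n s1 t1 I1 I2 Hg1 a b c2 d2); eauto).
      assert (Ed : d2 = b).
      { eapply (arm_unique n s1 t1 I1 I2 Hg1 b a d2 c2); eauto; apply at_sym; auto. }
      subst. right. destruct H2 as [H2|H2].
      - exists a, b. auto.
      - exists b, a. split; auto. tauto. }
    intros l. split; apply K; auto. intros x y; symmetry; apply Hg'.
Qed.

Lemma exists_max (P : nat -> Prop) (g : nat -> nat) (l : list nat) :
  (exists y, In y l /\ P y) -> exists y, In y l /\ P y /\ forall y', In y' l -> P y' -> g y' <= g y.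
Proof.
  induction l as [|x l IH]; intros Hex.
  - destruct Hex as (y & [] & _).
  - destruct (classic (exists y, In y l /\ P y)) as [H|H].
    + destruct (IH H) as (y & Hy & Py & Hm).
      destruct (classic (P x /\ g y < g x)) as [Hx|Hx].
      * exists x. split; [simpl; auto|]. split; [tauto|].
        intros y' [<-|Hy'] Py'; [lia|]. specialize (Hm y' Hy' Py'). lia.
      * exists y. split; [simpl; auto|]. split; auto.
        intros y' [<-|Hy'] Py'; auto. apply NNPP; intro C; apply Hx; split; auto; lia.
    + destruct Hex as (y & [Ey|Hy] & Py); [subst y|exfalso; apply H; eauto].
      exists x. split; [simpl; auto|]. split; auto.
      intros y' [<-|Hy'] Py'; [lia|]. exfalso; apply H; eauto.
Qed.

Definition key (K x y : nat) : nat := if Nat.ltb x y then y - x else y + K - x.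

Lemma key_cyc K x y y' : x < K -> y < K -> y' < K -> y <> x -> y' <> x -> y' <> y ->
  key K x y' <= key K x y -> cycopen x y y'.
Proof.
  unfold key, cycopen. destruct (Nat.ltb_spec x y); destruct (Nat.ltb_spec x y'); lia.
Qed.

Definition far (E : nat -> nat -> Prop) (S : list nat) (i j : nat) : Prop :=
  forall y, In y S -> E i y -> y <> j -> cycopen i j y.

Lemma far_exists (E : nat -> nat -> Prop) S K x : (forall z, In z S -> z < K) -> In x S ->
  (forall y, E x y -> y <> x) -> (exists z, In z S /\ E x z) ->
  exists y, In y S /\ E x y /\ far E S x y.
Proof.
  intros HK Hx Hirr Hex. destruct (exists_max (E x) (key K x) S Hex) as (y & Hy & Ey & Hm).
  exists y. split; auto. split; auto. intros y' Hy' Ey' Ne.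
  apply key_cyc with K; auto.
Qed.

Lemma walk_iter (E : nat -> nat -> Prop) (xs : nat -> nat) :
  (forall t, E (xs t) (xs (S t))) -> forall m p, walk E (map xs (seq p m)).
Proof.
  intros H. induction m as [|m IH]; intros p; [simpl; auto|].
  simpl. destruct m as [|m]; [simpl; auto|].
  specialize (IH (S p)). simpl in IH |- *. split; auto.
Qed.

Lemma mutual (E : nat -> nat -> Prop) Sl K :
  (forall x y, E x y -> E y x) -> (forall x y, E x y -> x <> y) ->
  (forall x l, NoDup (x :: l) -> 2 <= length l -> ~ walk E (x :: l ++ [x])) ->
  (forall z, In z Sl -> z < K) -> NoDup Sl ->
  (exists x y, In x Sl /\ In y Sl /\ E x y) ->
  exists i j, In i Sl /\ In j Sl /\ E i j /\ far E Sl i j /\ far E Sl j i.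
Proof.
  intros Hsym Hirr Hac HK HN (x0 & y0 & Hx0 & Hy0 & E0).
  set (Pre := fun x => In x Sl /\ exists z, In z Sl /\ E x z).
  assert (Hf : forall x, exists y, Pre x -> In y Sl /\ E x y /\ far E Sl x y).
  { intros x. destruct (classic (Pre x)) as [Hp|Hp].
    - destruct Hp as [Hx Hz].
      destruct (far_exists E Sl K x HK Hx ltac:(intros y Hy; apply not_eq_sym; apply Hirr; auto) Hz)
        as (y & Hy). exists y; auto.
    - exists 0; intros C; contradiction. }
  set (fr := fun x => proj1_sig (constructive_indefinite_description _ (Hf x))).
  assert (Hfr : forall x, Pre x -> In (fr x) Sl /\ E x (fr x) /\ far E Sl x (fr x)).
  { intros x. unfold fr. destruct (constructive_indefinite_description _ (Hf x)); simpl; auto. }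
  set (xs := fun t => Nat.iter t fr x0).
  assert (Hgood : forall t, Pre (xs t)).
  { induction t as [|t IH].
    - split; auto. exists y0; auto.
    - destruct (Hfr _ IH) as (H1 & H2 & H3). change (xs (S t)) with (fr (xs t)).
      split; auto. exists (xs t). split; [apply IH|]. apply Hsym; auto. }
  assert (Hstep : forall t, E (xs t) (xs (S t)) /\ far E Sl (xs t) (xs (S t))).
  { intros t. destruct (Hfr _ (Hgood t)) as (_ & H2 & H3). split; auto. }
  destruct (classic (exists t, xs (S (S t)) = xs t)) as [(t & Ht)|Hno].
  - exists (xs t), (xs (S t)). split; [apply Hgood|]. split; [apply Hgood|].
    split; [apply Hstep|]. split; [apply Hstep|]. rewrite <- Ht. apply Hstep.
  - exfalso.
    assert (HND : forall t, NoDup (map xs (seq 0 t))).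
    { induction t as [|t IH]; [constructor|].
      rewrite seq_S, map_app. simpl. apply NoDup_app; auto; [constructor; auto; constructor|].
      intros z Hz [Ez|[]]. apply in_map_iff in Hz. destruct Hz as (p & Hp & Hpin).
      apply in_seq in Hpin. rewrite <- Ez in Hp.
      destruct (Nat.eq_dec t (S p)) as [->|N1].
      + destruct (Hstep p) as [Hs _]. rewrite Hp in Hs. exact (Hirr _ _ Hs eq_refl).
      + destruct (Nat.eq_dec t (S (S p))) as [->|N2].
        * apply (Hno (ex_intro _ p (eq_sym Hp))).
        * apply (Hac (xs p) (map xs (seq (S p) (t - p - 1)))).
          -- assert (Eq : xs p :: map xs (seq (S p) (t - p - 1)) = map xs (seq p (t - p))).
             { remember (t - p - 1) as k eqn:Hk. replace (t - p) with (S k) by lia. reflexivity. }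
             rewrite Eq.
             replace t with (p + (t - p)) in IH by lia.
             rewrite seq_app, map_app in IH. simpl in IH.
             eapply NoDup_app_remove_l. exact IH.
          -- rewrite length_map, length_seq. lia.
          -- assert (Eq : xs p :: map xs (seq (S p) (t - p - 1)) ++ [xs p] = map xs (seq p (S (t - p)))).
             { rewrite seq_S, map_app. simpl. replace (p + (t - p)) with t by lia. rewrite <- Hp.
               remember (t - p - 1) as k eqn:Hk. replace (t - p) with (S k) by lia. reflexivity. }
             rewrite Eq. apply walk_iter. intros; apply Hstep. }
    pose proof (NoDup_incl_length (HND (S (length Sl))) ltac:(intros z Hz; apply in_map_iff in Hz;
      destruct Hz as (t & <- & _); apply Hgood)) as Hl.
    rewrite length_map, length_seq in Hl. lia.
Qed.

Definition Ef (E : nat -> nat -> Prop) (f : list lab) (u w : nat) : Prop :=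
  E u w /\ In u (sf f) /\ In w (sf f).

Fixpoint mu (F : list (list lab)) : nat :=
  match F with [] => 0 | f :: F' => (length f - 1) + mu F' end.

Lemma mu_app F1 F2 : mu (F1 ++ F2) = mu F1 + mu F2.
Proof. induction F1; simpl; lia. Qed.

Definition CI n (E : nat -> nat -> Prop) (s : state) : Prop :=
  reachable n s /\
  (forall x y, GA (arcs s) x y -> E x y) /\
  (forall x y, E x y -> ~ GA (arcs s) x y -> sameface (faces s) x y) /\
  (forall f, In f (faces s) -> forall x y, In x (sf f) -> In y (sf f) ->
     clos_refl_trans nat (Ef E f) x y).

Lemma rt_split (R R1 R2 : nat -> nat -> Prop) (S1 S2 : nat -> Prop) i j :
  (forall z, S1 z -> S2 z -> False) ->
  (forall x y, R x y -> (S1 x \/ S2 x) /\ (S1 y \/ S2 y)) ->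
  (forall x y, R x y -> S1 x -> S1 y -> R1 x y) -> (forall x y, R x y -> S2 x -> S2 y -> R2 x y) ->
  (forall x y, R x y -> S1 x -> S2 y -> x = i /\ y = j) ->
  (forall x y, R x y -> S2 x -> S1 y -> x = j /\ y = i) ->
  forall x y, clos_refl_trans_1n nat R x y ->
   (S1 x -> S1 y -> clos_refl_trans nat R1 x y) /\
   (S1 x -> S2 y -> clos_refl_trans nat R1 x i /\ clos_refl_trans nat R2 j y) /\
   (S2 x -> S1 y -> clos_refl_trans nat R2 x j /\ clos_refl_trans nat R1 i y) /\
   (S2 x -> S2 y -> clos_refl_trans nat R2 x y).
Proof.
  intros Hd Hs H1 H2 H12 H21 x y Hr. induction Hr as [x|x z y Hxz Hzy IH].
  - repeat split; intros; try apply rt_refl; exfalso; eauto.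
  - destruct IH as (I1 & I2 & I3 & I4).
    destruct (Hs _ _ Hxz) as [_ [Sz|Sz]].
    + split; [|split; [|split]]; intros Sx Sy.
      * apply rt_trans with z; [apply rt_step; apply H1; auto|auto].
      * destruct (I2 Sz Sy). split; auto. apply rt_trans with z; [apply rt_step; apply H1; auto|auto].
      * destruct (H21 _ _ Hxz Sx Sz) as [-> ->]. split; [apply rt_refl|auto].
      * destruct (H21 _ _ Hxz Sx Sz) as [-> ->]. apply (I2 Sz Sy).
    + split; [|split; [|split]]; intros Sx Sy.
      * destruct (H12 _ _ Hxz Sx Sz) as [-> ->]. apply (I3 Sz Sy).
      * destruct (H12 _ _ Hxz Sx Sz) as [-> ->]. split; [apply rt_refl|auto].
      * destruct (I3 Sz Sy). split; auto. apply rt_trans with z; [apply rt_step; apply H2; auto|auto].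
      * apply rt_trans with z; [apply rt_step; apply H2; auto|auto].
Qed.

Lemma face_nodup F f : NoDup (map short (concat F)) -> In f F -> NoDup (sf f).
Proof.
  intros H Hf. destruct (in_split _ _ Hf) as (F1 & F2 & ->).
  rewrite concat_app in H. simpl in H. rewrite !map_app in H.
  apply NoDup_app_remove_l in H. apply NoDup_app_remove_r in H. exact H.
Qed.

Lemma rt_restrict (E R : nat -> nat -> Prop) x y :
  (forall u w, E u w -> R u w) -> clos_refl_trans nat E x y -> clos_refl_trans nat R x y.
Proof. intros H Hr. induction Hr; [apply rt_step; auto|apply rt_refl|eapply rt_trans; eauto]. Qed.

Lemma play n (E : nat -> nat -> Prop) s f : noncrossing_tree n E -> CI n E s ->
  In f (faces s) -> 2 <= length f -> exists s', CI n E s' /\ mu (faces s') < mu (faces s).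
Proof.
  intros HE HC Hf Hlen.
  destruct HE as (Esym & Erng & Econn & Eac & Enc).
  destruct HC as (Hr & C1 & C2 & C3).
  pose proof (reach_inv n s Hr) as I.
  assert (HNDall : NoDup (map short (concat (faces s)))).
  { eapply Permutation_NoDup; [apply Permutation_sym, (i_perm n s I)|apply seq_NoDup]. }
  assert (Hrng : forall z, In z (map short (concat (faces s))) -> 1 <= z <= n).
  { intros z Hz. eapply Permutation_in in Hz; [|apply (i_perm n s I)]. apply in_seq in Hz. lia. }
  assert (HNDf : NoDup (sf f)) by (eapply face_nodup; eauto).
  assert (Hrf : forall z, In z (sf f) -> z < S n).
  { intros z Hz. assert (1 <= z <= n); [|lia]. apply Hrng. unfold sf in Hz.
    apply in_map_iff in Hz. destruct Hz as (al & <- & Hal). apply in_map. apply in_concat; eauto. }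
  assert (Hedge : exists x y, In x (sf f) /\ In y (sf f) /\ E x y).
  { destruct f as [|a0 [|b0 rest]]; simpl in Hlen; try lia.
    assert (Hne : short a0 <> short b0).
    { intro Eq. unfold sf in HNDf. simpl in HNDf. apply NoDup_cons_iff in HNDf as [Hn _]. apply Hn. left; auto. }
    pose proof (C3 _ Hf (short a0) (short b0) ltac:(simpl; auto) ltac:(simpl; auto)) as Hc.
    apply clos_rt_rt1n in Hc. inversion Hc; [congruence|].
    match goal with H : Ef E _ _ ?z |- _ => destruct H as (Exz & Hx & Hz); exists (short a0), z; auto end. }
  destruct (mutual E (sf f) (S n) Esym (fun x y H => proj2 (proj2 (Erng x y H)))
              Eac Hrf HNDf Hedge) as (i & j & Hi & Hj & Eij & Fij & Fji).
  assert (Hij : i <> j) by (apply (Erng i j Eij)).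
  unfold sf in Hi, Hj. apply in_map_iff in Hi. apply in_map_iff in Hj.
  destruct Hi as (a & Ea & Ha). destruct Hj as (b & Eb & Hb).
  destruct (in_split _ _ Ha) as (f1 & f2 & Ef1).
  assert (Hb' : In b (f2 ++ f1)).
  { rewrite Ef1 in Hb. apply in_app_iff in Hb. apply in_app_iff. simpl in Hb.
    destruct Hb as [Hb|[Hb|Hb]]; auto. subst. congruence. }
  destruct (in_split _ _ Hb') as (X & Y & EXY).
  destruct s as [F A]. simpl in *.
  destruct (in_split _ _ Hf) as (F1 & F2 & EF).
  assert (Hvu : (a :: f2) ++ f1 = a :: X ++ b :: Y) by (simpl; rewrite EXY; reflexivity).
  pose proof (step_intro F1 F2 f1 (a :: f2) X Y a b A Hvu) as Hst.
  rewrite <- Ef1, <- EF in Hst.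
  set (B1 := X ++ [Pair a b]) in *. set (B2 := Y ++ [Pair b a]) in *.
  exists (mkState (F1 ++ B1 :: B2 :: F2) ((a, b) :: A)).
  assert (PB : Permutation f (a :: b :: X ++ Y)).
  { rewrite Ef1. eapply perm_trans; [apply Permutation_app_comm|]. rewrite Hvu.
    apply perm_skip. apply Permutation_sym, Permutation_middle. }
  assert (HsB : forall x, In x (sf f) <-> x = i \/ x = j \/ In x (sf X) \/ In x (sf Y)).
  { intros x. unfold sf. split.
    - intros Hx. eapply Permutation_in in Hx; [|apply Permutation_map, PB]. simpl in Hx.
      rewrite map_app, in_app_iff in Hx. rewrite Ea, Eb in Hx. intuition.
    - intros Hx. eapply Permutation_in; [apply Permutation_map, Permutation_sym, PB|]. simpl.
      rewrite map_app, in_app_iff. rewrite Ea, Eb. intuition. }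
  assert (HND2 : NoDup (i :: j :: sf X ++ sf Y)).
  { assert (P2 : Permutation (sf f) (i :: j :: sf X ++ sf Y)).
    { unfold sf. rewrite <- Ea, <- Eb, <- map_app.
      change (short a :: short b :: map short (X ++ Y)) with (map short (a :: b :: X ++ Y)).
      apply Permutation_map, PB. }
    exact (Permutation_NoDup P2 HNDf). }
  apply NoDup_cons_iff in HND2 as [HiN HND2]. apply NoDup_cons_iff in HND2 as [HjN HND2].
  assert (HiX : ~ In i (sf X)) by (intro; apply HiN; right; apply in_app_iff; auto).
  assert (HiY : ~ In i (sf Y)) by (intro; apply HiN; right; apply in_app_iff; auto).
  assert (HjX : ~ In j (sf X)) by (intro; apply HjN; apply in_app_iff; auto).
  assert (HjY : ~ In j (sf Y)) by (intro; apply HjN; apply in_app_iff; auto).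
  assert (HXY : forall x, In x (sf X) -> In x (sf Y) -> False) by (intros; eapply nodup_disj; eauto).
  assert (Hcs : csorted (i :: sf X ++ j :: sf Y)).
  { assert (H := i_cs n _ I f Hf). simpl in H. rewrite Ef1 in H. unfold sf in H. rewrite map_app in H.
    apply csorted_rot in H. rewrite <- map_app, Hvu in H. simpl in H. rewrite map_app in H.
    simpl in H. rewrite Ea, Eb in H. exact H. }
  destruct (csorted_split _ _ _ _ Hcs) as [HX HY].
  assert (HsB1 : forall x, In x (sf B1) <-> In x (sf X) \/ x = i).
  { intros x. unfold B1, sf. rewrite map_app, in_app_iff. simpl. rewrite Ea. intuition. }
  assert (HsB2 : forall x, In x (sf B2) <-> In x (sf Y) \/ x = j).
  { intros x. unfold B2, sf. rewrite map_app, in_app_iff. simpl. rewrite Eb. intuition. }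
  assert (Hcross : forall x y, E x y -> (x = i \/ In x (sf X)) -> (y = j \/ In y (sf Y)) -> x = i /\ y = j).
  { intros x y Exy Sx Sy.
    destruct Sx as [->|Sx]; destruct Sy as [->|Sy]; auto; exfalso.
    - assert (Hyf : In y (sf f)) by (apply HsB; auto).
      assert (y <> j) by (intro; subst; contradiction).
      pose proof (Fij y Hyf Exy ltac:(auto)). pose proof (HY y Sy). unfold cycopen in *; lia.
    - assert (Hxf : In x (sf f)) by (apply HsB; auto).
      assert (x <> i) by (intro; subst; contradiction).
      pose proof (Fji x Hxf (Esym _ _ Exy) ltac:(auto)). pose proof (HX x Sx). unfold cycopen in *; lia.
    - apply (cross_num E i j x y Enc Esym Hij Eij Exy (HX x Sx) (HY y Sy)). }
  assert (HinF : forall g, In g F -> In g F1 \/ In g F2 \/ g = f).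
  { intros g Hg. rewrite EF in Hg. apply in_app_iff in Hg. simpl in Hg. intuition. }
  assert (HoldF' : forall g, In g F1 \/ In g F2 -> In g (F1 ++ B1 :: B2 :: F2)).
  { intros g Hg. apply in_app_iff. simpl. tauto. }
  assert (HoldF : forall g, In g F1 \/ In g F2 -> In g F).
  { intros g Hg. rewrite EF. apply in_app_iff. simpl. tauto. }
  split; [split; [|split; [|split]]|].
  - eapply rt_trans; [exact Hr|]. apply rt_step. exact Hst.
  - simpl. intros x y H. apply GA_cons in H. rewrite Ea, Eb in H.
    destruct H as [[<- <-]|[[<- <-]|H]]; auto.
  - simpl. intros x y Exy Hn.
    assert (Hn' : ~ GA A x y) by (intro; apply Hn; apply GA_cons; auto).
    destruct (C2 x y Exy Hn') as (g & Hg & Hx & Hy).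
    apply HinF in Hg. destruct Hg as [Hg|[Hg| ->]].
    + exists g. split; [apply HoldF'; tauto|auto].
    + exists g. split; [apply HoldF'; tauto|auto].
    + apply HsB in Hx. apply HsB in Hy.
      assert (N1 : ~ (x = i /\ y = j)) by (intros [-> ->]; apply Hn; apply GA_cons; rewrite Ea, Eb; auto).
      assert (N2 : ~ (x = j /\ y = i)) by (intros [-> ->]; apply Hn; apply GA_cons; rewrite Ea, Eb; auto).
      assert (Sx : (x = i \/ In x (sf X)) \/ (x = j \/ In x (sf Y))) by tauto.
      assert (Sy : (y = i \/ In y (sf X)) \/ (y = j \/ In y (sf Y))) by tauto.
      destruct Sx as [Sx|Sx]; destruct Sy as [Sy|Sy].
      * exists B1. split; [apply in_app_iff; simpl; auto|]. rewrite !HsB1. tauto.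
      * exfalso. apply N1. apply Hcross; auto.
      * exfalso. apply N2. destruct (Hcross y x (Esym _ _ Exy) Sy Sx). auto.
      * exists B2. split; [apply in_app_iff; simpl; auto|]. rewrite !HsB2. tauto.
  - simpl. intros g Hg x y Hx Hy.
    apply in_app_iff in Hg. simpl in Hg.
    assert (HQ : forall x y, clos_refl_trans nat (Ef E f) x y ->
      ((x = i \/ In x (sf X)) -> (y = i \/ In y (sf X)) -> clos_refl_trans nat (Ef E B1) x y) /\
      ((x = i \/ In x (sf X)) -> (y = j \/ In y (sf Y)) -> clos_refl_trans nat (Ef E B1) x i /\ clos_refl_trans nat (Ef E B2) j y) /\
      ((x = j \/ In x (sf Y)) -> (y = i \/ In y (sf X)) -> clos_refl_trans nat (Ef E B2) x j /\ clos_refl_trans nat (Ef E B1) i y) /\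
      ((x = j \/ In x (sf Y)) -> (y = j \/ In y (sf Y)) -> clos_refl_trans nat (Ef E B2) x y)).
    { intros x0 y0 H0.
      apply (rt_split (Ef E f) (Ef E B1) (Ef E B2)
       (fun z => z = i \/ In z (sf X)) (fun z => z = j \/ In z (sf Y)) i j).
      - intros z [->|Z1] [E2|Z2]; auto.
        + apply HjX. rewrite <- E2. exact Z1.
        + eapply HXY; eauto.
      - intros u w (_ & Hu & Hw). apply HsB in Hu. apply HsB in Hw. tauto.
      - intros u w (Euw & _ & _) Su Sw. split; auto. rewrite !HsB1. tauto.
      - intros u w (Euw & _ & _) Su Sw. split; auto. rewrite !HsB2. tauto.
      - intros u w (Euw & _ & _) Su Sw. apply Hcross; auto.
      - intros u w (Euw & _ & _) Su Sw. destruct (Hcross w u (Esym _ _ Euw) Sw Su). auto.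
      - apply clos_rt_rt1n; exact H0. }
    destruct Hg as [Hg|[<-|[<-|Hg]]].
    + apply C3; auto; apply HoldF; tauto.
    + apply HsB1 in Hx; apply HsB1 in Hy.
      assert (Hr0 : clos_refl_trans nat (Ef E f) x y) by (apply C3; auto; apply HsB; tauto).
      apply (HQ x y Hr0); tauto.
    + apply HsB2 in Hx; apply HsB2 in Hy.
      assert (Hr0 : clos_refl_trans nat (Ef E f) x y) by (apply C3; auto; apply HsB; tauto).
      apply (HQ x y Hr0); tauto.
    + apply C3; auto; apply HoldF; tauto.
  - simpl. rewrite EF, !mu_app. simpl.
    pose proof (Permutation_length PB) as Hl. simpl in Hl. rewrite length_app in Hl.
    unfold B1, B2. rewrite !length_app. simpl. lia.
Qed.

Lemma ci_init n E : 1 <= n -> noncrossing_tree n E -> CI n E (init n).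
Proof.
  intros Hn (Esym & Erng & Econn & Eac & Enc).
  split; [apply rt_refl|]. split; [|split].
  - intros x y H. simpl in H. exfalso; eapply GA_nil; eauto.
  - intros x y Exy _. simpl. exists (map Base (seq 1 n)). rewrite sf_init.
    destruct (Erng x y Exy) as (H1 & H2 & _). split; [simpl; auto|]. rewrite !in_seq. lia.
  - simpl. intros f [<-|[]] x y Hx Hy. rewrite sf_init in Hx, Hy. apply in_seq in Hx, Hy.
    eapply rt_restrict; [|apply Econn; lia].
    intros u w Euw. split; auto. rewrite sf_init, !in_seq. destruct (Erng u w Euw). lia.
Qed.

Lemma finish n E s : noncrossing_tree n E -> CI n E s ->
  (forall f, In f (faces s) -> length f <= 1) ->
  endstate n s /\ forall i j, graph_of s i j <-> E i j.
Proof.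
  intros (Esym & Erng & Econn & Eac & Enc) (Hr & C1 & C2 & C3) Hl.
  split; [split; auto|].
  - intros s' Hst. inversion Hst; subst. simpl in Hl.
    assert (L := Hl (u ++ v) ltac:(apply in_app_iff; simpl; auto)).
    rewrite length_app in L. assert (L2 : length (v ++ u) = length (a :: X ++ b :: Y)) by (rewrite H; auto).
    rewrite length_app in L2. simpl in L2. rewrite length_app in L2. simpl in L2. lia.
  - intros i j. split.
    + intros H. apply C1. unfold graph_of, GA in *. exact H.
    + intros Eij. destruct (classic (GA (arcs s) i j)) as [G|G]; [unfold graph_of, GA in *; exact G|].
      exfalso. destruct (C2 i j Eij G) as (g & Hg & Hi & Hj).
      pose proof (Hl g Hg). unfold sf in Hi, Hj.
      destruct g as [|al [|al' g]]; simpl in *; try lia; try contradiction.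
      destruct Hi as [<-|[]]; destruct Hj as [Hj|[]].
      destruct (Erng _ _ Eij) as (_ & _ & Ne). congruence.
Qed.

Lemma build n E : noncrossing_tree n E -> forall k s, CI n E s -> mu (faces s) <= k ->
  exists s', endstate n s' /\ forall i j, graph_of s' i j <-> E i j.
Proof.
  intros HE k. induction k as [|k IH]; intros s HC Hm.
  - destruct (classic (exists f, In f (faces s) /\ 2 <= length f)) as [(f & Hf & Hl)|Hno].
    + destruct (play n E s f HE HC Hf Hl) as (s' & _ & Hlt). lia.
    + exists s. apply finish; auto. intros f Hf. destruct (Nat.le_gt_cases (length f) 1); auto.
      exfalso; apply Hno; exists f; split; auto; lia.
  - destruct (classic (exists f, In f (faces s) /\ 2 <= length f)) as [(f & Hf & Hl)|Hno].
    + destruct (play n E s f HE HC Hf Hl) as (s' & HC' & Hlt). apply (IH s'); auto. lia.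
    + exists s. apply finish; auto. intros f Hf. destruct (Nat.le_gt_cases (length f) 1); auto.
      exfalso; apply Hno; exists f; split; auto; lia.
Qed.

Theorem theorem1 (n : nat) (Hn : 1 <= n) :
  (forall s, endstate n s -> noncrossing_tree n (graph_of s)) /\
  (forall s t, endstate n s -> endstate n t ->
     (top_equiv n s t <-> forall i j, graph_of s i j <-> graph_of t i j)) /\
  (forall E : nat -> nat -> Prop, noncrossing_tree n E ->
     exists s, endstate n s /\ forall i j, graph_of s i j <-> E i j).
Proof.
  split; [|split].
  - apply part1.
  - apply part2.
  - intros E HE. apply (build n E HE (mu (faces (init n))) (init n)); auto. apply ci_init; auto.
Qed.
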